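(* For integers $n,m$ and $y=(y_1,y_2,y_3)\in Q$, \[\Phi_{n,m;y}(u,v;1,1;z,w;q)=\Delta_y(z,w;q)\,\frac{\Phi_{n,m;y}(u,v;z,w;q)-zwq^{m+y_1-1}\Phi_{n,m;y}(uq^{-y_{12}}/z,\,vq^{-y_{23}}/w;z,w;q)}{1-zwq^{-1}}.\]
   Context: $Q=\{y\in\mathbb{Z}^3:y_1+y_2+y_3=0\}$, $y_{ij}:=y_i-y_j$. For $n\in\mathbb{Z}$, $(a;q)_n=(a;q)_\infty/(aq^n;q)_\infty$ ($1/(q;q)_n=0$ for $n<0$), $(a_1,\dots,a_k;q)_n=\prod_i(a_i;q)_n$. $\Phi_{n,m}(z,w;q):=\frac{(zwq;q)_{n+m}}{(q,zq,zwq;q)_n(q,wq,zwq;q)_m}$; $\Phi_{n,m}(u,v;z,w;q):=\Phi_{n,m}(z/q,w;q)-\frac{uz}{(z;q)_2}\Phi_{n-1,m}(zq,w/q;q)+\frac{uvzw^2}{(w,zw;q)_2}\Phi_{n-1,m-1}(z,wq;q)$; $\Phi_{n,m;y}(z,w;q):=\frac{(zwq;q)_{n+m}}{(q;q)_{n-y_1}(zq;q)_{n-y_2}(zwq;q)_{n-y_3}(q;q)_{m+y_3}(wq;q)_{m+y_2}(zwq;q)_{m+y_1}}$; $\Phi_{n,m;y}(u,v;z,w;q):=\frac{\Phi_{n-y_1,m-y_1-y_2}(u,v;zq^{y_{12}},wq^{y_{23}};q)}{(zq;q)_{y_{12}}(wq;q)_{y_{23}}(zwq;q)_{y_{13}}}$.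 With $\rho=(1,2,3)$, $\sigma\in S_3$ in one-line notation and $\chi$ the indicator, $\Phi_{n,m}(u,v;c,d;z,w;q):=\sum_{\sigma\in S_3}\operatorname{sgn}(\sigma)(uz)^{\sigma_1-1}(v/d)^{\chi(\sigma_3=1)}(c/u)^{\chi(\sigma_1=3)}(dw)^{3-\sigma_3}\Phi_{n,m;\sigma-\rho}(z/q,w/q;q)$, and \[\Phi_{n,m;y}(u,v;c,d;z,w;q):=\frac{\Phi_{n-y_1,m-y_1-y_2}(u,v;c,d;zq^{y_{12}},wq^{y_{23}};q)}{(z;q)_{y_{12}}(w;q)_{y_{23}}(zw/q;q)_{y_{13}}}.\] Finally $\Delta_y(z,w;q):=\frac{(1-zq^{y_{12}})(1-wq^{y_{23}})(1-zwq^{y_{13}})}{(1-z)(1-w)(1-zw)}$. *)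

(* Defs.v *)
(* identities of rational functions, stated in the field of
   rational functions Q(u,v,z,w,q) = {fraction {mpoly rat[5]}}. *)
From HB Require Import structures.
From mathcomp Require Import all_boot all_order all_algebra all_fingroup.
From mathcomp Require Import mpoly fraction.
Set Implicit Arguments. Unset Strict Implicit. Unset Printing Implicit Defensive.
Import Order.TTheory GRing.Theory Num.Theory.
Local Open Scope ring_scope.

Section QPoch.
Variables (K : fieldType) (q : K).

Definition poch (a : K) (n : int) : K :=
  match n with
  | Posz k => \prod_(i < k) (1 - a * q ^+ i)
  | Negz k => (\prod_(i < k.+1) (1 - a * q ^- i.+1))^-1
  end.

(* 1/(a;q)_n, with the convention 1/(q;q)_n = 0 for n < 0 (this is
   automatic: the product below contains the factor 1 - q q^{-1} = 0). *)
Definition invpoch (a : K) (n : int) : K :=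
  match n with
  | Posz k => (\prod_(i < k) (1 - a * q ^+ i))^-1
  | Negz k => \prod_(i < k.+1) (1 - a * q ^- i.+1)
  end.

Definition Phi0 (n m : int) (z w : K) : K :=
  poch (z * w * q) (n + m)
  * invpoch q n * invpoch (z * q) n * invpoch (z * w * q) n
  * invpoch q m * invpoch (w * q) m * invpoch (z * w * q) m.

Definition Phi1 (n m : int) (u v z w : K) : K :=
  Phi0 n m (z / q) w
  - u * z / poch z 2 * Phi0 (n - 1) m (z * q) (w / q)
  + u * v * z * w ^+ 2 / (poch w 2 * poch (z * w) 2) * Phi0 (n - 1) (m - 1) z (w * q).

Definition Phiy0 (n m y1 y2 y3 : int) (z w : K) : K :=
  poch (z * w * q) (n + m)
  * invpoch q (n - y1) * invpoch (z * q) (n - y2) * invpoch (z * w * q) (n - y3)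
  * invpoch q (m + y3) * invpoch (w * q) (m + y2) * invpoch (z * w * q) (m + y1).

Definition Phiy1 (n m y1 y2 y3 : int) (u v z w : K) : K :=
  Phi1 (n - y1) (m - y1 - y2) u v (z * q ^ (y1 - y2)) (w * q ^ (y2 - y3))
  / (poch (z * q) (y1 - y2) * poch (w * q) (y2 - y3) * poch (z * w * q) (y1 - y3)).

(* Phi_{n,m}(u,v;c,d;z,w;q); a permutation s : 'S_3 of {0,1,2} encodes the
   one-line notation sigma_i = s (i-1) + 1, so sigma - rho =
   (s 0 - 0, s 1 - 1, s 2 - 2). *)
Definition Phi2 (n m : int) (u v c d z w : K) : K :=
  \sum_(s : 'S_3)
    (-1) ^+ odd_perm s
    * (u * z) ^+ (s ord0)
    * (v / d) ^+ (s ord_max == ord0 :> 'I_3)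
    * (c / u) ^+ (s ord0 == ord_max :> 'I_3)
    * (d * w) ^+ (2 - s ord_max)
    * Phiy0 n m ((s ord0)%:Z - 0) ((s (inord 1 : 'I_3))%:Z - 1) ((s ord_max)%:Z - 2)
            (z / q) (w / q).

Definition Phiy2 (n m y1 y2 y3 : int) (u v c d z w : K) : K :=
  Phi2 (n - y1) (m - y1 - y2) u v c d (z * q ^ (y1 - y2)) (w * q ^ (y2 - y3))
  / (poch z (y1 - y2) * poch w (y2 - y3) * poch (z * w / q) (y1 - y3)).

Definition Delta (y1 y2 y3 : int) (z w : K) : K :=
  (1 - z * q ^ (y1 - y2)) * (1 - w * q ^ (y2 - y3)) * (1 - z * w * q ^ (y1 - y3))
  / ((1 - z) * (1 - w) * (1 - z * w)).

End QPoch.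

Definition RF : fieldType := {fraction {mpoly rat[5]}}.
Definition var (i : 'I_5) : RF := @FracField.tofrac {mpoly rat[5]} 'X_i.
Definition uu : RF := var (inord 0).
Definition vv : RF := var (inord 1).
Definition zz : RF := var (inord 2).
Definition ww : RF := var (inord 3).
Definition qq : RF := var (inord 4).

(* Main.v *)
Require Import Defs.
From HB Require Import structures.
From mathcomp Require Import all_boot all_order all_algebra all_fingroup.
From mathcomp Require Import mpoly fraction.
From mathcomp Require Import ring lra zify.
Import Order.TTheory GRing.Theory Num.Theory.
Local Open Scope ring_scope.
Set Bullet Behavior "Strict Subproofs".

Definition i0 : 'I_3 := @Ordinal 3 0 isT.
Definition i1 : 'I_3 := @Ordinal 3 1 isT.
Definition i2 : 'I_3 := @Ordinal 3 2 isT.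
Definition t01 : 'S_3 := tperm i0 i1.
Definition t12 : 'S_3 := tperm i1 i2.
Definition t02 : 'S_3 := tperm i0 i2.
Definition c1 : 'S_3 := (t01 * t02)%g.
Definition c2 : 'S_3 := (t02 * t01)%g.
Definition S3l : seq 'S_3 := [:: 1%g; t01; t12; t02; c1; c2].
Definition sig3 (s : 'S_3) : nat * nat * nat := (val (s i0), val (s i1), val (s i2)).

Lemma S3l_sig : map sig3 S3l = [:: (0,1,2); (1,0,2); (0,2,1); (2,1,0); (1,2,0); (2,0,1)]%N.
Proof.
rewrite /S3l /sig3 /= /c1 /c2 /t01 /t12 /t02 !permM ?perm1 !permE /=.
done.
Qed.

Lemma S3l_uniq : uniq S3l.
Proof. by apply: (@map_uniq _ _ sig3); rewrite S3l_sig. Qed.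

Lemma S3l_all (s : 'S_3) : s \in S3l.
Proof.
apply/negPn/negP => hs.
have := @uniq_leq_size _ (s :: S3l) (enum 'S_3).
rewrite cons_uniq hs S3l_uniq -cardT card_Sn => /(_ isT).
by move=> /(_ (fun x _ => mem_enum _ x)).
Qed.

Lemma sumS3 (R : nmodType) (F : 'S_3 -> R) :
  \sum_(s : 'S_3) F s = F 1%g + F t01 + F t12 + F t02 + F c1 + F c2.
Proof.
have H : perm_eq (index_enum 'S_3) S3l.
  apply: uniq_perm; first by rewrite index_enum_uniq.
    by apply: S3l_uniq.
  by move=> x; rewrite S3l_all mem_index_enum.
rewrite (perm_big _ H).
rewrite /S3l !big_cons big_nil /=. by rewrite addr0 !addrA.
Qed.

Section P.
Variables (K : fieldType) (q : K).
Hypothesis hq : q != 0.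

Definition generic (a : K) := forall k : int, 1 - a * q ^ k != 0.

Lemma negz_add1 k : Negz k.+1 + 1 = Negz k. Proof. rewrite !NegzE; lia. Qed.
Lemma negz0_add1 : Negz 0 + 1 = 0. Proof. rewrite !NegzE; lia. Qed.
Lemma posz_add1 k : Posz k + 1 = Posz k.+1. Proof. lia. Qed.

Lemma expNegz (x : K) k : x ^ Negz k = (x ^+ k.+1)^-1. Proof. by []. Qed.
Lemma expPosz (x : K) k : x ^ Posz k = x ^+ k. Proof. by []. Qed.

Lemma exp_o0 (x : K) n : x ^+ (nat_of_ord (@ord0 n)).+1 = x. Proof. by []. Qed.

Lemma PS a n : generic a -> poch q a (n + 1) = poch q a n * (1 - a * q ^ n).
Proof.
move=> ga; case: n => [k|k].
  by rewrite posz_add1 /poch big_ord_recr.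
case: k => [|k].
  rewrite negz0_add1 /poch /= big_ord0 big_ord1 exp_o0 mulVf //.
  by have := ga (Negz 0); rewrite expNegz expr1.
rewrite negz_add1 /poch /= [in RHS]big_ord_recr expNegz /= invfM -mulrA mulVf ?mulr1 //.
by have := ga (Negz k.+1); rewrite expNegz.
Qed.

Lemma PB a n : generic a -> poch q a (n + 1) = (1 - a) * poch q (a * q) n.
Proof.
move=> ga; case: n => [k|k].
  rewrite posz_add1 /poch big_ord_recl /= expr0 mulr1; congr (_ * _).
  by apply: eq_bigr => i _; rewrite exprS mulrA.
have h1 : 1 - a != 0 by have := ga 0; rewrite expr0z mulr1.
case: k => [|k].
  by rewrite negz0_add1 /poch /= big_ord0 big_ord1 exp_o0 mulfK // mulfV.
rewrite negz_add1 /poch /= [in RHS]big_ord_recl exp_o0 mulfK // invfM mulrA mulfV // mul1r.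
congr (_^-1); apply: eq_bigr => i _.
by rewrite [q ^+ (bump 0 i).+1]exprS invfM mulrA mulfK.
Qed.


Lemma generic_sh a j : generic a -> generic (a * q ^ j).
Proof. by move=> ga k; rewrite -mulrA -expfzDr. Qed.

Lemma generic_shn a (j : nat) : generic a -> generic (a * q ^+ j).
Proof. by move=> ga; rewrite -expPosz; apply: generic_sh. Qed.

Lemma poch_neq0 a n : generic a -> poch q a n != 0.
Proof.
move=> ga; case: n => [k|k] /=.
  by rewrite prodf_seq_neq0; apply/allP => i _; have := ga (Posz i).
rewrite invr_eq0 prodf_seq_neq0; apply/allP => i _.
by have := ga (Negz i); rewrite expNegz.
Qed.

Lemma invpochE a n : generic a -> invpoch q a n = (poch q a n)^-1.
Proof. by move=> ga; case: n => [k|k] //=; rewrite invrK. Qed.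

Lemma poch_add a n k : generic a ->
  poch q a (n + k) = poch q a n * poch q (a * q ^ n) k.
Proof.
move=> ga.
have gb := generic_sh a n ga.
have step : forall k, (poch q a (n + k) = poch q a n * poch q (a * q ^ n) k) <->
   (poch q a (n + (k + 1)) = poch q a n * poch q (a * q ^ n) (k + 1)).
  move=> kk; rewrite addrA PS // PS // -mulrA expfzDr // !mulrA.
  have hf : 1 - a * q ^ n * q ^ kk != 0 by rewrite -mulrA -expfzDr //; apply: ga.
  split => [-> //|h]; apply: (mulIf hf); by rewrite h.
case: k => [j|j].
  elim: j => [|j IH]; first by rewrite addr0 /poch /= big_ord0 mulr1.
  by rewrite -posz_add1; apply/(step (Posz j)).
elim: j => [|j IH].
  by apply/(step (Negz 0)); rewrite negz0_add1 addr0 /poch /= big_ord0 mulr1.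
by apply/(step (Negz j.+1)); rewrite negz_add1.
Qed.

Definition PA (a : K) (n : int) := poch q a n.
Definition PL (b : K) (t : int) := poch q b t.

Lemma PA_neq0 a n : generic a -> PA a n != 0.
Proof. exact: poch_neq0. Qed.

Lemma pochM a c (j : nat) n n0 t : generic a -> c = a * q ^+ j ->
  n + j%:Z = n0 + t -> poch q c n = PA a n0 * PL (a * q ^ n0) t / PL a (Posz j).
Proof.
move=> ga -> e; rewrite /PA /PL.
have := poch_add a (Posz j) n ga; rewrite addrC e poch_add // expPosz => ->.
by rewrite mulrAC mulfV ?mul1r // poch_neq0.
Qed.

Lemma invpochM a c (j : nat) n n0 t : generic a -> c = a * q ^+ j ->
  n + j%:Z = n0 + t -> invpoch q c n = (PA a n0 * PL (a * q ^ n0) t / PL a (Posz j))^-1.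
Proof.
move=> ga ec e; rewrite -(pochM _ _ _ _ _ _ ga ec e) invpochE //.
by rewrite ec; apply: generic_shn.
Qed.

Lemma ID a n : (forall k : nat, 1 - a * q ^+ k != 0) ->
  invpoch q a n = invpoch q a (n + 1) * (1 - a * q ^ n).
Proof.
move=> ha; case: n => [k|k].
  rewrite posz_add1 /invpoch big_ord_recr /= invfM -mulrA mulVf ?mulr1 //.
case: k => [|k].
  by rewrite negz0_add1 /invpoch /= big_ord0 invr1 mul1r big_ord1.
by rewrite negz_add1 /invpoch /= [in LHS]big_ord_recr expNegz.
Qed.

Lemma gen_ne (a : K) (k : int) (s c : K) : generic a -> s != 0 ->
  c = s * (1 - a * q ^ k) -> c != 0.
Proof. by move=> ga hs ->; rewrite mulf_neq0 // ga. Qed.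

Hypothesis hq1 : forall k : nat, 1 - q ^+ k.+1 != 0.

Definition IQ (n : int) := invpoch q q n.

Lemma hqq (k : nat) : 1 - q * q ^+ k != 0.
Proof. by rewrite -exprS. Qed.

Lemma iq0 n n0 : n = n0 -> invpoch q q n = IQ n0.
Proof. by move=> ->. Qed.

Lemma iq1 n n0 : n + 1 = n0 -> invpoch q q n = IQ n0 * (1 - q ^ n0).
Proof.
move=> e; rewrite (ID q n hqq) e /IQ; congr (_ * (1 - _)).
by rewrite -e expfzDr // expr1z mulrC.
Qed.

Lemma iq2 n n0 : n + 2%:Z = n0 -> invpoch q q n = IQ n0 * (1 - q ^ n0) * (1 - q ^ n0 / q).
Proof.
move=> e; rewrite (ID q n hqq) (@iq1 (n + 1) n0); last by rewrite -e; lia.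
congr (_ * (1 - _)).
have -> : n0 = (n + 1) + 1 by rewrite -e; lia.
by rewrite expfzDr // expr1z mulfK // expfzDr // expr1z mulrC.
Qed.

Lemma PL0 b : PL b (Posz 0) = 1. Proof. by rewrite /PL /poch /= big_ord0. Qed.
Lemma PL1 b : PL b (Posz 1) = 1 - b. Proof. by rewrite /PL /poch /= big_ord1 expr0 mulr1. Qed.
Lemma PL2 b : PL b (Posz 2) = (1 - b) * (1 - b * q).
Proof. by rewrite /PL /poch /= !big_ord_recr big_ord0 /= expr0 expr1 mul1r mulr1. Qed.
Lemma PL3 b : PL b (Posz 3) = (1 - b) * (1 - b * q) * (1 - b * q * q).
Proof. by rewrite /PL /poch /= !big_ord_recr big_ord0 /= expr0 expr1 expr2 mul1r mulr1 mulrA. Qed.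
Lemma PLm1 b : PL b (Negz 0) = (1 - b / q)^-1.
Proof. by rewrite /PL /poch /= big_ord1. Qed.
Lemma PLm2 b : PL b (Negz 1) = ((1 - b / q) * (1 - b / (q * q)))^-1.
Proof. by rewrite /PL /poch /= !big_ord_recr big_ord0 /= mul1r expr1 expr2. Qed.

Lemma poch2 b : poch q b 2 = (1 - b) * (1 - b * q).
Proof. by rewrite -PL2. Qed.

End P.

Section Core.
Variables (K : fieldType) (q Z W u v : K) (N M : int).
Hypothesis hq : q != 0.
Hypothesis hq1 : forall k : nat, 1 - q ^+ k.+1 != 0.
Hypothesis gZ : generic K q Z.
Hypothesis gW : generic K q W.
Hypothesis gZW : generic K q (Z * W / q).
Hypothesis hu : u != 0.
Hypothesis hZ : Z != 0.
Hypothesis hW : W != 0.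

Lemma ord0E : (ord0 : 'I_3) = i0. Proof. exact: val_inj. Qed.
Lemma ord1E : (inord 1 : 'I_3) = i1. Proof. by apply: val_inj; rewrite /= inordK. Qed.
Lemma ord2E : (ord_max : 'I_3) = i2. Proof. exact: val_inj. Qed.


Ltac normQ K q hq hq1 N M :=
  repeat match goal with
  | |- context [invpoch (K:=K) q q ?n] =>
    first [ rewrite (@iq0 K q n N); [|lia]
          | rewrite (@iq0 K q n M); [|lia]
          | rewrite (@iq1 K q hq hq1 n N); [|lia]
          | rewrite (@iq1 K q hq hq1 n M); [|lia]
          | rewrite (@iq2 K q hq hq1 n N); [|lia]
          | rewrite (@iq2 K q hq hq1 n M); [|lia] ]
  end.

Ltac normT K q hq a c j n ga e N M :=
  first [ rewrite (@invpochM K q hq a c j n N (Posz 0) ga e); [|lia]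
        | rewrite (@invpochM K q hq a c j n N (Posz 1) ga e); [|lia]
        | rewrite (@invpochM K q hq a c j n N (Posz 2) ga e); [|lia]
        | rewrite (@invpochM K q hq a c j n N (Posz 3) ga e); [|lia]
        | rewrite (@invpochM K q hq a c j n N (Negz 0) ga e); [|lia]
        | rewrite (@invpochM K q hq a c j n N (Negz 1) ga e); [|lia]
        | rewrite (@invpochM K q hq a c j n M (Posz 0) ga e); [|lia]
        | rewrite (@invpochM K q hq a c j n M (Posz 1) ga e); [|lia]
        | rewrite (@invpochM K q hq a c j n M (Posz 2) ga e); [|lia]
        | rewrite (@invpochM K q hq a c j n M (Posz 3) ga e); [|lia]
        | rewrite (@invpochM K q hq a c j n M (Negz 0) ga e); [|lia]
        | rewrite (@invpochM K q hq a c j n M (Negz 1) ga e); [|lia] ].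

Ltac normTP K q hq a c j n ga e N M :=
  first [ rewrite (@pochM K q hq a c j n (N + M) (Posz 0) ga e); [|lia]
        | rewrite (@pochM K q hq a c j n (N + M) (Posz 1) ga e); [|lia]
        | rewrite (@pochM K q hq a c j n (N + M) (Posz 2) ga e); [|lia]
        | rewrite (@pochM K q hq a c j n (N + M) (Posz 3) ga e); [|lia] ].

Ltac normJ K q hq a c n ga N M :=
  first [ let e := fresh "e" in
          assert (e : c = a * q ^+ 0) by (rewrite expr0; field; try done);
          normT K q hq a c 0%N n ga e N M; clear e
        | let e := fresh "e" in
          assert (e : c = a * q ^+ 1) by (rewrite expr1; field; try done);
          normT K q hq a c 1%N n ga e N M; clear e
        | let e := fresh "e" in
          assert (e : c = a * q ^+ 2) by (rewrite expr2; field; try done);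
          normT K q hq a c 2%N n ga e N M; clear e
        | let e := fresh "e" in
          assert (e : c = a * q ^+ 3) by (rewrite !exprS expr0; field; try done);
          normT K q hq a c 3%N n ga e N M; clear e ].

Ltac normJP K q hq a c n ga N M :=
  first [ let e := fresh "e" in
          assert (e : c = a * q ^+ 0) by (rewrite expr0; field; try done);
          normTP K q hq a c 0%N n ga e N M; clear e
        | let e := fresh "e" in
          assert (e : c = a * q ^+ 1) by (rewrite expr1; field; try done);
          normTP K q hq a c 1%N n ga e N M; clear e
        | let e := fresh "e" in
          assert (e : c = a * q ^+ 2) by (rewrite expr2; field; try done);
          normTP K q hq a c 2%N n ga e N M; clear e
        | let e := fresh "e" in
          assert (e : c = a * q ^+ 3) by (rewrite !exprS expr0; field; try done);
          normTP K q hq a c 3%N n ga e N M; clear e ].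

Ltac normG K q hq Z W gZ gW gZW N M :=
  repeat match goal with
  | |- context [invpoch (K:=K) q ?c ?n] =>
    first [ normJ K q hq Z c n gZ N M
          | normJ K q hq W c n gW N M
          | normJ K q hq (Z * W / q) c n gZW N M ]
  | |- context [poch (K:=K) q ?c ?n] =>
    normJP K q hq (Z * W / q) c n gZW N M
  end.

Ltac gk K q hq a s ga k x y :=
  apply: (@gen_ne K q a k s _ ga); [ first [done | exact: oner_neq0] |
    rewrite /x /y ?expPosz ?expfzDr // ?expr1z ?expr0z -?exprnN ?expr1; field; done].
Ltac gs K q hq a s ga N M x y :=
  first [ gk K q hq a s ga (Posz 0) x y | gk K q hq a s ga (Posz 1) x y
        | gk K q hq a s ga (Posz 2) x y
        | gk K q hq a s ga N x y | gk K q hq a s ga (N + 1) x y | gk K q hq a s ga (N - 1) x y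
        | gk K q hq a s ga M x y | gk K q hq a s ga (M + 1) x y | gk K q hq a s ga (M - 1) x y].
Ltac gall K q hq Z W gZ gW gZW N M x y :=
  first [ done | exact: oner_neq0
        | gs K q hq Z (1 : K) gZ N M x y | gs K q hq Z q gZ N M x y
        | gs K q hq W (1 : K) gW N M x y | gs K q hq W q gW N M x y
        | gs K q hq (Z * W / q) (1 : K) gZW N M x y | gs K q hq (Z * W / q) q gZW N M x y ].

Lemma core : Phi2 q N M u v 1 1 Z W * (1 - Z * W / q) =
  Phi1 q N M u v Z W - Z * W * q ^ (M - 1) * Phi1 q N M (u / Z) (v / W) Z W.
Proof.
rewrite /Phi2 sumS3 ord0E ord1E ord2E.
rewrite /t01 /t12 /t02 /c1 /c2 !odd_permM ?odd_perm1 !odd_tperm !permM ?perm1 !permE /=.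
rewrite /Phiy0 /Phi1 /Phi0 !poch2.
normQ K q hq hq1 N M.
normG K q hq Z W gZ gW gZW N M.
rewrite !PL0 ?PL1 ?PL2 ?PL3 ?PLm1 ?PLm2.
have hM1 : q ^ (M - 1) = q ^ M / q by rewrite expfzDr // -exprnN expr1.
rewrite hM1 (expfzDr _ _ hq).
have hN := PA_neq0 K q Z N gZ. have hM := PA_neq0 K q W M gW.
have hNZ := PA_neq0 K q _ N gZW. have hMZ := PA_neq0 K q _ M gZW.
have hNMZ := PA_neq0 K q _ (N + M) gZW.
set pNM := PA K q (Z * W / q) (N + M) in hNMZ *.
set pZ := PA K q Z N in hN *. set pW := PA K q W M in hM *.
set pN := PA K q (Z * W / q) N in hNZ *. set pM := PA K q (Z * W / q) M in hMZ *.
have hx : q ^ N != 0 by apply: expfz_neq0.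
have hy : q ^ M != 0 by apply: expfz_neq0.
set x := q ^ N in hx *. set y := q ^ M in hy *.
rewrite !subnn !subn0 (_ : (2 - 1)%N = 1%N) //.
field.
repeat (apply/andP; split); gall K q hq Z W gZ gW gZW N M x y.

Qed.
End Core.


Lemma Rrel (K : fieldType) (q a : K) (k : int) : q != 0 -> generic K q a ->
  poch q (a * q) k = poch q a k * (1 - a * q ^ k) / (1 - a).
Proof.
move=> hq ga; have h1 : 1 - a != 0 by have := ga 0; rewrite expr0z mulr1.
by rewrite -PS // PB // mulrAC mulfV // mul1r.
Qed.

Lemma generic_eq (K : fieldType) (q a b : K) : a = b -> generic K q a -> generic K q b.
Proof. by move=> ->. Qed.

Lemma main_abs (K : fieldType) (q z w u v : K) (n m y1 y2 y3 : int)
  (hy : y1 + y2 + y3 = 0) (hq : q != 0) (hq1 : forall k : nat, 1 - q ^+ k.+1 != 0)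
  (gz : generic K q z) (gw : generic K q w) (gzw : generic K q (z * w))
  (hu : u != 0) (hz : z != 0) (hw : w != 0) :
  Phiy2 q n m y1 y2 y3 u v 1 1 z w
  = Delta q y1 y2 y3 z w
    * (Phiy1 q n m y1 y2 y3 u v z w
       - z * w * q ^ (m + y1 - 1)
         * Phiy1 q n m y1 y2 y3 (u * q ^ (- (y1 - y2)) / z)
                 (v * q ^ (- (y2 - y3)) / w) z w)
    / (1 - z * w * q ^ (-1)).
Proof.
rewrite /Phiy2 /Phiy1 /Delta -!invr_expz.
have e13 : q ^ (y1 - y3) = q ^ (y1 - y2) * q ^ (y2 - y3).
  by rewrite -expfzDr //; congr (_ ^ _); lia.
have em : q ^ (m + y1 - 1) = q ^ (m - y1 - y2 - 1) * q ^ (y1 - y2) * q ^ (y2 - y3).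
  by rewrite -!expfzDr //; congr (_ ^ _); lia.
have e1 : q ^ (-1) = q^-1 by rewrite -exprnN expr1.
have ezw : generic K q (z * q ^ (y1 - y2) * (w * q ^ (y2 - y3)) / q).
  apply: (@generic_eq K q _ _ _ (@generic_sh K q hq _ (y1 - y3 - 1) gzw)).
  rewrite (_ : y1 - y3 - 1 = (y1 - y2) + (y2 - y3) + (-1)); last by lia.
  by rewrite !expfzDr // e1; field.
have gZ := @generic_sh K q hq _ (y1 - y2) gz.
have gW := @generic_sh K q hq _ (y2 - y3) gw.
have hA1 : q ^ (y1 - y2) != 0 by apply: expfz_neq0.
have hA2 : q ^ (y2 - y3) != 0 by apply: expfz_neq0.
have hZ : z * q ^ (y1 - y2) != 0 by apply: mulf_neq0.
have hW : w * q ^ (y2 - y3) != 0 by apply: mulf_neq0.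
have hc := @core K q _ _ u v (n - y1) (m - y1 - y2) hq hq1 gZ gW ezw hu hZ hW.
rewrite (_ : u / q ^ (y1 - y2) / z = u / (z * q ^ (y1 - y2))); last by rewrite invfM [_^-1 * _^-1]mulrC mulrA.
rewrite (_ : v / q ^ (y2 - y3) / w = v / (w * q ^ (y2 - y3))); last by rewrite invfM [_^-1 * _^-1]mulrC mulrA.
have gzwq : generic K q (z * w / q).
  apply: (@generic_eq K q _ _ _ (@generic_sh K q hq _ (-1) gzw)).
  by rewrite e1.
have ezw2 : poch q (z * w) (y1 - y3) =
   poch q (z * w / q) (y1 - y3) * (1 - z * w / q * q ^ (y1 - y3)) / (1 - z * w / q).
  by rewrite -(@Rrel K q _ _ hq gzwq) divfK.
rewrite em (@Rrel K q _ _ hq gz) (@Rrel K q _ _ hq gw) (@Rrel K q _ _ hq gzw) ezw2 !e13.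
have hA : Phi1 q (n - y1) (m - y1 - y2) u v (z * q ^ (y1 - y2)) (w * q ^ (y2 - y3)) =
  Phi2 q (n - y1) (m - y1 - y2) u v 1 1 (z * q ^ (y1 - y2)) (w * q ^ (y2 - y3))
    * (1 - z * q ^ (y1 - y2) * (w * q ^ (y2 - y3)) / q)
  + z * q ^ (y1 - y2) * (w * q ^ (y2 - y3)) * q ^ (m - y1 - y2 - 1)
    * Phi1 q (n - y1) (m - y1 - y2) (u / (z * q ^ (y1 - y2))) (v / (w * q ^ (y2 - y3)))
        (z * q ^ (y1 - y2)) (w * q ^ (y2 - y3)).
  by rewrite hc subrK.
rewrite hA.
have pz := @poch_neq0 K q z (y1 - y2) gz.
have pw := @poch_neq0 K q w (y2 - y3) gw.
have pzw := @poch_neq0 K q _ (y1 - y3) gzwq.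
set P2 := Phi2 _ _ _ _ _ _ _ _ _.
set B := Phi1 _ _ _ _ _ _ _.
set A1 := q ^ (y1 - y2) in hA1 *.
set A2 := q ^ (y2 - y3) in hA2 *.
set X := q ^ (m - y1 - y2 - 1).
set Pz := poch q z _ in pz *.
set Pw := poch q w _ in pw *.
set Pzw := poch q (z * w / q) _ in pzw *.
field.
have g0 : forall a, generic K q a -> 1 - a != 0.
  by move=> a ga; have := ga 0; rewrite expr0z mulr1.
repeat (apply/andP; split).
- exact: hq.
- apply: (@gen_ne K q _ 0 q _ gzwq hq); rewrite expr0z. field. exact: hq.
- exact: (g0 _ gzw).
- exact: (g0 _ gw).
- exact: (g0 _ gz).
- by have := gzw (y1 - y3); rewrite e13.
- apply: (@gen_ne K q _ (y1 - y3) q _ gzwq hq); rewrite e13 /A1 /A2. field. exact: hq.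
- exact: pzw.
- exact: gw.
- exact: pw.
- exact: gz.
- exact: pz.
Qed.

Definition tf (p : {mpoly rat[5]}) : RF := @FracField.tofrac {mpoly rat[5]} p.

Lemma tf_neq0 (v : 'I_5 -> rat) p : p.@[v] != 0 -> tf p != 0.
Proof.
move=> h; rewrite /tf tofrac_eq0; apply: contraNneq h => ->; by rewrite meval0.
Qed.

Definition pt (a b : rat) : 'I_5 -> rat := fun i => if nat_of_ord i == 4%N then a else b.

Lemma pt4 a b : pt a b (inord 4) = a. Proof. by rewrite /pt inordK. Qed.
Lemma ptj a b j : (j < 4)%N -> pt a b (inord j) = b.
Proof. by move=> hj; rewrite /pt inordK ?(ltn_trans hj) //; case: eqP hj => // ->. Qed.

Lemma tfX i : var i = tf 'X_i. Proof. by []. Qed.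

Lemma qq_neq0 : qq != 0.
Proof. by rewrite /qq tfX; apply: (@tf_neq0 (pt 2 2)); rewrite mevalXU pt4. Qed.

Lemma qq1 (k : nat) : 1 - qq ^+ k.+1 != 0.
Proof.
rewrite /qq tfX /tf -tofracXn -tofrac1 -tofracB -/(tf _).
apply: (@tf_neq0 (pt 2 2)); rewrite mevalB meval1 rmorphXn /= mevalXU pt4.
by rewrite subr_eq0 lt_eqF // exprn_egt1.
Qed.

Lemma negz_aux (K : fieldType) (Q t : K) j : Q != 0 ->
  1 - t * Q ^ Negz j = (Q ^+ j.+1 - t) / Q ^+ j.+1.
Proof.
move=> hQ; have hQn : Q ^+ j.+1 != 0 by apply: expf_neq0.
rewrite (_ : Q ^ Negz j = (Q ^+ j.+1)^-1) //.
by field.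
Qed.

Lemma gen_tf P : P.@[pt 1 2] != 1 -> generic RF qq (tf P).
Proof.
move=> hP k; case: k => [j|j].
  have -> : 1 - tf P * qq ^ Posz j = tf (1 - P * 'X_(inord 4) ^+ j).
    by rewrite /tf tofracB tofrac1 tofracM tofracXn.
  apply: (@tf_neq0 (pt 1 2)).
  by rewrite mevalB meval1 mevalM rmorphXn /= mevalXU pt4 expr1n mulr1 subr_eq0 eq_sym.
have hqn : qq ^+ j.+1 != 0 by apply: expf_neq0; apply: qq_neq0.
rewrite (@negz_aux _ qq _ j qq_neq0).
apply: mulf_neq0; last by rewrite invr_eq0; exact: hqn.
have -> : qq ^+ j.+1 - tf P = tf ('X_(inord 4) ^+ j.+1 - P).
  by rewrite /tf tofracB tofracXn.
apply: (@tf_neq0 (pt 1 2)).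
by rewrite mevalB rmorphXn /= mevalXU pt4 expr1n subr_eq0 eq_sym.
Qed.

Lemma gen_zz : generic RF qq zz.
Proof. by rewrite /zz tfX; apply: gen_tf; rewrite mevalXU ptj. Qed.
Lemma gen_ww : generic RF qq ww.
Proof. rewrite /ww tfX; apply: gen_tf; by rewrite mevalXU ptj. Qed.
Lemma gen_zw : generic RF qq (zz * ww).
Proof.
rewrite /zz /ww !tfX /tf -tofracM -/(tf _); apply: gen_tf.
by rewrite mevalM !mevalXU !ptj.
Qed.
Lemma zz_neq0 : zz != 0.
Proof. rewrite /zz tfX; apply: (@tf_neq0 (pt 1 2)); by rewrite mevalXU ptj. Qed.
Lemma ww_neq0 : ww != 0.
Proof. rewrite /ww tfX; apply: (@tf_neq0 (pt 1 2)); by rewrite mevalXU ptj. Qed.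
Lemma uu_neq0 : uu != 0.
Proof. rewrite /uu tfX; apply: (@tf_neq0 (pt 1 2)); by rewrite mevalXU ptj. Qed.

Theorem corollary4p10 (n m y1 y2 y3 : int) (hy : y1 + y2 + y3 = 0) :
  Phiy2 qq n m y1 y2 y3 uu vv 1 1 zz ww
  = Delta qq y1 y2 y3 zz ww
    * (Phiy1 qq n m y1 y2 y3 uu vv zz ww
       - zz * ww * qq ^ (m + y1 - 1)
         * Phiy1 qq n m y1 y2 y3 (uu * qq ^ (- (y1 - y2)) / zz)
                 (vv * qq ^ (- (y2 - y3)) / ww) zz ww)
    / (1 - zz * ww * qq ^ (-1)).
Proof.
exact: (@main_abs RF qq zz ww uu vv n m y1 y2 y3 hy qq_neq0 qq1 gen_zz gen_ww gen_zw
  uu_neq0 zz_neq0 ww_neq0).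
Qed.
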